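(* Let $N\ge3$, $\lambda\in\mathbb R$, and let $\mathbf P$ and $V$ be as defined below. Define the planar and non-planar tadpole amplitudes $$A^{\mathrm{pl}}_{x,y}=\frac{\lambda}{N^{3/2}}\sum_{a,b,c,d}\mathbf P_{x,a}\mathbf P_{y,b}\mathbf P_{c,d}V_{a,b,c,d},\qquad A^{\mathrm{np}}_{x,y}=\frac{\lambda}{N^{3/2}}\sum_{a,b,c,d}\mathbf P_{x,a}\mathbf P_{y,c}\mathbf P_{b,d}V_{a,b,c,d},$$ where $x,y,a,b,c,d$ range over $\{1,\dots,N\}^3$. Then $$A^{\mathrm{pl}}=\lambda\frac{(N-2)(4N-1)}{12N^{3/2}(N-1)}\,\mathbf P,\qquad A^{\mathrm{np}}=\lambda\frac{N^2-4}{3N^{3/2}(N-1)}\,\mathbf P,$$ and consequently $2A^{\mathrm{pl}}+A^{\mathrm{np}}=\lambda f_T(N)\mathbf P$ with $f_T(N)=\frac{(N-2)(2N+1)}{2N^{3/2}(N-1)}$, which is $O(N^{-1/2})$ as $N\to\infty$.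
   Context: Multi-indices $a=(a_1,a_2,a_3)\in\{1,\dots,N\}^3$. $\mathbf P$ is the symmetric kernel $\mathbf P_{a,b}=\tfrac13(\delta_{a_1b_1}\delta_{a_2b_2}\delta_{a_3b_3}-\delta_{a_1b_3}\delta_{a_2b_2}\delta_{a_3b_1})+\tfrac16(\delta_{a_1b_2}\delta_{a_2b_1}\delta_{a_3b_3}+\delta_{a_1b_1}\delta_{a_2b_3}\delta_{a_3b_2})-\tfrac16(\delta_{a_1b_2}\delta_{a_2b_3}\delta_{a_3b_1}+\delta_{a_1b_3}\delta_{a_2b_1}\delta_{a_3b_2})+\tfrac1{2(N-1)}(\delta_{a_1b_3}\delta_{a_2a_3}\delta_{b_1b_2}+\delta_{a_1a_2}\delta_{a_3b_1}\delta_{b_2b_3})-\tfrac1{2(N-1)}(\delta_{a_1b_1}\delta_{a_2a_3}\delta_{b_2b_3}+\delta_{a_1a_2}\delta_{a_3b_3}\delta_{b_1b_2})$, the orthogonal projector onto traceless tensors with mixed permutation symmetry (Young tableau with rows $\{1,2\},\{3\}$). The quartic (''complete'' or tetrahedral) vertex kernel is $V_{a,b,c,d}=\delta_{a_3b_1}\delta_{b_3c_1}\delta_{c_3d_1}\delta_{d_3a_1}\delta_{a_2c_2}\delta_{b_2d_2}$, so that $\sum V_{a,b,c,d}T_aT_bT_cT_d=T_{i_1i_2i_3}T_{i_3i_4i_5}T_{i_5i_2i_6}T_{i_6i_4i_1}$. These are the tadpole contributions at first order in $\lambda$ to the two-point function of the model with partition function $\int d\mu_{\mathbf P}(T)\exp\big(\frac{\lambda}{4N^{3/2}}T_{i_1i_2i_3}T_{i_3i_4i_5}T_{i_5i_2i_6}T_{i_6i_4i_1}\big)$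 (adjacent external legs: planar, multiplicity 2; opposite external legs: non-planar, multiplicity 1). *)

(* Defs.v *)
From HB Require Import structures.
From mathcomp Require Import all_boot all_order all_algebra.
Unset Printing Implicit Defensive.
Import Order.TTheory GRing.Theory Num.Theory.
Local Open Scope ring_scope.

(* Multi-index a = (a1,a2,a3) in {0..N-1}^3 (0-based version of {1..N}^3). *)
Definition idx (N : nat) : finType := ('I_N * 'I_N * 'I_N)%type.
Definition i1 {N} (a : idx N) : 'I_N := a.1.1.
Definition i2 {N} (a : idx N) : 'I_N := a.1.2.
Definition i3 {N} (a : idx N) : 'I_N := a.2.

Definition dlt {R : rcfType} {N} (i j : 'I_N) : R := (i == j)%:R.

Definition Pker (R : rcfType) (N : nat) (a b : idx N) : R :=
  3^-1 * (dlt (i1 a) (i1 b) * dlt (i2 a) (i2 b) * dlt (i3 a) (i3 b)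
          - dlt (i1 a) (i3 b) * dlt (i2 a) (i2 b) * dlt (i3 a) (i1 b))
  + 6^-1 * (dlt (i1 a) (i2 b) * dlt (i2 a) (i1 b) * dlt (i3 a) (i3 b)
          + dlt (i1 a) (i1 b) * dlt (i2 a) (i3 b) * dlt (i3 a) (i2 b))
  - 6^-1 * (dlt (i1 a) (i2 b) * dlt (i2 a) (i3 b) * dlt (i3 a) (i1 b)
          + dlt (i1 a) (i3 b) * dlt (i2 a) (i1 b) * dlt (i3 a) (i2 b))
  + (2 * (N%:R - 1))^-1 *
      (dlt (i1 a) (i3 b) * dlt (i2 a) (i3 a) * dlt (i1 b) (i2 b)
       + dlt (i1 a) (i2 a) * dlt (i3 a) (i1 b) * dlt (i2 b) (i3 b))
  - (2 * (N%:R - 1))^-1 *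
      (dlt (i1 a) (i1 b) * dlt (i2 a) (i3 a) * dlt (i2 b) (i3 b)
       + dlt (i1 a) (i2 a) * dlt (i3 a) (i3 b) * dlt (i1 b) (i2 b)).

Definition Vker (R : rcfType) (N : nat) (a b c d : idx N) : R :=
  dlt (i3 a) (i1 b) * dlt (i3 b) (i1 c) * dlt (i3 c) (i1 d) * dlt (i3 d) (i1 a)
  * dlt (i2 a) (i2 c) * dlt (i2 b) (i2 d).

Definition N32 (R : rcfType) (N : nat) : R := N%:R * Num.sqrt (N%:R).

Definition Apl (R : rcfType) (N : nat) (lam : R) (x y : idx N) : R :=
  lam / N32 R N * \sum_(a : idx N) \sum_(b : idx N) \sum_(c : idx N) \sum_(d : idx N)
    Pker R N x a * Pker R N y b * Pker R N c d * Vker R N a b c d.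

Definition Anp (R : rcfType) (N : nat) (lam : R) (x y : idx N) : R :=
  lam / N32 R N * \sum_(a : idx N) \sum_(b : idx N) \sum_(c : idx N) \sum_(d : idx N)
    Pker R N x a * Pker R N y c * Pker R N b d * Vker R N a b c d.

Definition fT (R : rcfType) (N : nat) : R :=
  (N%:R - 2) * (2 * N%:R + 1) / (2 * N32 R N * (N%:R - 1)).

(* Main.v *)
Require Import Defs.
From HB Require Import structures.
From mathcomp Require Import all_boot all_order all_algebra.
From mathcomp Require Import ring lra.
Import Order.TTheory GRing.Theory Num.Theory.
Local Open Scope ring_scope.

Record mono := Mono { mz : int; ma : nat; mb : nat; mi : nat; mj : nat;
                      meqs : seq (nat * nat) }.

Definition cval (R : rcfType) (N : nat) (m : mono) : R :=
  (mz m)%:~R * (2^-1)^+(ma m) * (3^-1)^+(mb m) * (N%:R)^+(mi m)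
  * ((N%:R - 1)^-1)^+(mj m).
Definition dl (R : rcfType) (N : nat) (e : nat -> 'I_N) (p : nat * nat) : R :=
  @dlt R N (e p.1) (e p.2).
Definition pint (R : rcfType) (N : nat) (e : nat -> 'I_N) (s : seq (nat * nat)) : R := \prod_(p <- s) dl R N e p.
Definition mint (R : rcfType) (N : nat) (e : nat -> 'I_N) (m : mono) : R := cval R N m * pint R N e (meqs m).
Definition lint (R : rcfType) (N : nat) (e : nat -> 'I_N) (L : seq mono) : R := \sum_(m <- L) mint R N e m.

Definition mmul (m1 m2 : mono) : mono :=
  Mono (mz m1 * mz m2) (ma m1 + ma m2) (mb m1 + mb m2) (mi m1 + mi m2)
       (mj m1 + mj m2) (meqs m1 ++ meqs m2).
Definition lmul (L1 L2 : seq mono) := [seq mmul m1 m2 | m1 <- L1, m2 <- L2].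

Lemma mint_mul (R : rcfType) (N : nat) e m1 m2 : mint R N e (mmul m1 m2) = mint R N e m1 * mint R N e m2.
Proof.
rewrite /mint /cval /pint /= big_cat /= intrM !exprD; ring.
Qed.

Lemma lint_mul (R : rcfType) (N : nat) e L1 L2 : lint R N e (lmul L1 L2) = lint R N e L1 * lint R N e L2.
Proof.
rewrite /lint /lmul big_allpairs_dep mulr_suml; apply: eq_bigr => m1 _.
rewrite mulr_sumr; apply: eq_bigr => m2 _; exact: mint_mul.
Qed.

Definition upd {N : nat} (e : nat -> 'I_N) (v : nat) (i : 'I_N) : nat -> 'I_N :=
  fun z => if z == v then i else e z.

Fixpoint extract (v : nat) (s : seq (nat * nat)) : option (nat * seq (nat * nat)) :=
  match s with
  | [::] => None
  | p :: t => if (p.1 == v) && (p.2 != v) then Some (p.2, t)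
              else if (p.2 == v) && (p.1 != v) then Some (p.1, t)
              else match extract v t with
                   | Some (w, r) => Some (w, p :: r)
                   | None => None end
  end.

Definition sbst (v w : nat) (p : nat * nat) :=
  (if p.1 == v then w else p.1, if p.2 == v then w else p.2).

Definition msumvar (v : nat) (m : mono) : mono :=
  match extract v (meqs m) with
  | Some (w, r) => Mono (mz m) (ma m) (mb m) (mi m) (mj m) (map (sbst v w) r)
  | None => Mono (mz m) (ma m) (mb m) (mi m).+1 (mj m)
                 (filter (fun p => ~~ ((p.1 == v) && (p.2 == v))) (meqs m))
  end.
Definition lsumvar v L := map (msumvar v) L.

Lemma dlt_sym (R : rcfType) (N : nat) (i j : 'I_N) : @dlt R N i j = dlt j i.
Proof. by rewrite /dlt eq_sym. Qed.

Lemma extract_some v s w r : extract v s = Some (w, r) ->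
  w != v /\ forall R N e, pint R N e s = dl R N e (v, w) * pint R N e r.
Proof.
elim: s w r => [|[p1 p2] t IH] w r //=.
case: ifP => [/andP [/eqP -> H] [<- <-]|_].
  by split=> // R N e; rewrite /pint big_cons.
case: ifP => [/andP [/eqP -> H] [<- <-]|_].
  by split=> // R N e; rewrite /pint big_cons /dl /= dlt_sym.
case E: (extract v t) => [[w' r']|] // [<- <-].
have [Hw Hp] := IH _ _ E; split=> // R N e.
by rewrite /pint !big_cons -/(pint _ _ _ t) Hp -/(pint _ _ _ r') mulrCA.
Qed.

Lemma extract_none v s : extract v s = None ->
  forall p, p \in s -> (p.1 == v) = (p.2 == v).
Proof.
elim: s => [|[p1 p2] t IH] //=.
case: ifP => //; case: ifP => //.
case E: (extract v t) => [[w' r']|] // H1 H2 _ p.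
rewrite in_cons => /orP [/eqP -> /=|]; last exact: IH.
move: H1 H2; case: (p1 == v); case: (p2 == v) => //=.
Qed.

Lemma sum_dlt (R : rcfType) (N : nat) (j : 'I_N) (F : 'I_N -> R) : \sum_(i < N) @dlt R N i j * F i = F j.
Proof.
rewrite (bigD1 j) //= big1 ?addr0 /dlt ?eqxx ?mul1r // => i /negbTE ->.
by rewrite mul0r.
Qed.

Lemma msumvar_ok (R : rcfType) (N : nat) (e : nat -> 'I_N) v m :
  \sum_(i < N) mint R N (upd e v i) m = mint R N e (msumvar v m).
Proof.
rewrite /msumvar; case E: (extract v (meqs m)) => [[w r]|].
  have [Hw Hp] := @extract_some _ _ _ _ E.
  rewrite /mint /=.
  under eq_bigr => i _ do rewrite Hp /dl /= {1}/upd eqxx {1}/upd (negbTE Hw) mulrCA.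
  rewrite (@sum_dlt R N (e w) (fun i => cval R N m * pint R N (upd e v i) r)); congr (_ * _).
  rewrite /pint big_map; apply: eq_bigr => [[p1 p2]] _; rewrite /dl /upd /=.
  by case: (p1 == v); case: (p2 == v); rewrite ?eqxx.
have Hn := @extract_none _ _ E.
have Hc : forall i, pint R N (upd e v i) (meqs m) =
   pint R N e [seq p <- meqs m | ~~ ((p.1 == v) && (p.2 == v))].
  move=> i; rewrite /pint big_filter (bigID (fun p => ~~ ((p.1 == v) && (p.2 == v)))) /=.
  rewrite [X in _ * X]big1_seq ?mulr1; last first.
    by move=> [p1 p2] /andP [/negbNE /andP [/= /eqP -> /eqP ->] _]; rewrite /dl /upd eqxx /dlt eqxx.
  rewrite big_seq_cond [RHS]big_seq_cond; apply: eq_bigr => [[p1 p2]] /andP [Hin Hk]; move: (Hn _ Hin) Hk => /= H12 Hk.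
  rewrite /dl /upd /=; move: H12 Hk; case: (p1 == v); case: (p2 == v) => //=.
rewrite /mint /=; under eq_bigr => i _ do rewrite Hc.
rewrite sumr_const card_ord -mulr_natr /cval /= exprS; ring.
Qed.

Lemma lsumvar_ok (R : rcfType) (N : nat) (e : nat -> 'I_N) v L :
  \sum_(i < N) lint R N (upd e v i) L = lint R N e (lsumvar v L).
Proof.
rewrite /lint /lsumvar big_map exchange_big /=; apply: eq_bigr => m _.
exact: msumvar_ok.
Qed.

Fixpoint isum (R : rcfType) (N : nat) (vs : seq nat) (e : nat -> 'I_N)
   (F : (nat -> 'I_N) -> R) : R :=
  match vs with
  | [::] => F e
  | v :: vs' => \sum_(i < N) isum R N vs' (upd e v i) F
  end.
Fixpoint lsumvars (vs : seq nat) (L : seq mono) :=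
  match vs with [::] => L | v :: vs' => lsumvar v (lsumvars vs' L) end.

Lemma isum_ok (R : rcfType) (N : nat) vs (e : nat -> 'I_N) L :
  isum R N vs e (fun e' => lint R N e' L) = lint R N e (lsumvars vs L).
Proof.
elim: vs e => [|v vs IH] e //=.
under eq_bigr => i _ do rewrite IH.
exact: lsumvar_ok.
Qed.

Fixpoint canon_aux (n : nat) (todo sol : seq (nat * nat)) : seq (nat * nat) :=
  match n with
  | 0 => todo ++ sol
  | n'.+1 =>
    match todo with
    | [::] => sol
    | p :: t =>
      if p.1 == p.2 then canon_aux n' t sol else
      let h := maxn p.1 p.2 in let l := minn p.1 p.2 in
      canon_aux n' (map (sbst h l) t) ((h, l) :: map (sbst h l) sol)
    end
  end.

Lemma dl_subst (R : rcfType) (N : nat) (e : nat -> 'I_N) h l s :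
  dl R N e (h, l) * pint R N e s = dl R N e (h, l) * pint R N e (map (sbst h l) s).
Proof.
rewrite /dl /dlt /=; case: eqP => [E|_]; last by rewrite !mul0r.
congr (_ * _); rewrite /pint big_map; apply: eq_bigr => [[p1 p2]] _.
by rewrite /dl /=; case: eqP => [->|_]; case: eqP => [->|_]; rewrite ?E.
Qed.

Lemma pint_mid (R : rcfType) (N : nat) (e : nat -> 'I_N) a q b :
  pint R N e (a ++ q :: b) = dl R N e q * pint R N e (a ++ b).
Proof. by rewrite /pint !big_cat big_cons /= mulrCA. Qed.

Lemma canon_aux_ok (R : rcfType) (N : nat) (e : nat -> 'I_N) n todo sol :
  pint R N e (todo ++ sol) = pint R N e (canon_aux n todo sol).
Proof.
elim: n todo sol => [|n IH] [|p t] sol //=.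
rewrite {1}/pint big_cons -/(pint R N e (t ++ sol)).
case: ifP => [/eqP E|_].
  by rewrite -IH /dl E /dlt eqxx mul1r.
rewrite -IH pint_mid -map_cat.
have -> : dl R N e p = dl R N e (maxn p.1 p.2, minn p.1 p.2).
  case: p => p1 p2; rewrite /dl /=; case: (leqP p1 p2) => _; [exact: dlt_sym | by []].
by rewrite -dl_subst.
Qed.

Definition pairle (p q : nat * nat) : bool :=
  (p.1 < q.1)%N || ((p.1 == q.1) && (p.2 <= q.2)%N).
Definition mcanon (m : mono) : mono :=
  Mono (mz m) (ma m) (mb m) (mi m) (mj m)
       (sort pairle (canon_aux (size (meqs m)) (meqs m) [::])).
Definition lcanon (L : seq mono) := map mcanon L.

Lemma lcanon_ok (R : rcfType) (N : nat) (e : nat -> 'I_N) L :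
  lint R N e (lcanon L) = lint R N e L.
Proof.
rewrite /lint big_map; apply: eq_bigr => m _; rewrite /mint /=; congr (_ * _).
set X := canon_aux _ _ _.
have Hp : perm_eq (sort pairle X) X by rewrite perm_sort.
by rewrite /pint (perm_big _ Hp) -/(pint R N e X) -canon_aux_ok cats0.
Qed.

Definition sameexp (m1 m2 : mono) :=
  [&& ma m1 == ma m2, mb m1 == mb m2, mi m1 == mi m2 & mj m1 == mj m2].
Fixpoint cins (m : mono) (l : seq mono) : seq mono :=
  match l with
  | [::] => [:: m]
  | m' :: l' => if sameexp m m'
                then Mono (mz m + mz m') (ma m') (mb m') (mi m') (mj m') [::] :: l'
                else m' :: cins m l'
  end.
Definition cnorm (l : seq mono) := filter (fun m => mz m != 0) (foldr cins [::] l).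
Definition sumc (R : rcfType) (N : nat) (l : seq mono) : R := \sum_(m <- l) cval R N m.

Lemma sumc_cins (R : rcfType) (N : nat) m l :
  sumc R N (cins m l) = cval R N m + sumc R N l.
Proof.
elim: l => [|m' l IH] /=; first by rewrite /sumc big_seq1 big_nil addr0.
case: ifP => [/and4P [/eqP Ha /eqP Hb /eqP Hi /eqP Hj]|_].
  rewrite /sumc !big_cons /cval /= Ha Hb Hi Hj intrD; ring.
by rewrite /sumc !big_cons -/(sumc R N _) IH addrCA.
Qed.

Lemma sumc_cnorm (R : rcfType) (N : nat) l : sumc R N (cnorm l) = sumc R N l.
Proof.
have H1 : sumc R N (foldr cins [::] l) = sumc R N l.
  elim: l => [|m l IH] //=; by rewrite sumc_cins IH /sumc big_cons.
rewrite -H1 /cnorm /sumc big_filter [in RHS](bigID (fun m => mz m != 0)) /=.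
rewrite [X in _ = _ + X]big1 ?addr0 // => m /negPn /eqP Hz.
by rewrite /cval Hz mulr0z !mul0r.
Qed.

Definition keys (L1 L2 : seq mono) := undup [seq meqs m | m <- L1 ++ L2].
Definition coefs (L : seq mono) (k : seq (nat * nat)) := [seq m <- L | meqs m == k].
Definition groups (L1 L2 : seq mono) :=
  [seq (cnorm (coefs L1 k), cnorm (coefs L2 k)) | k <- keys L1 L2].
Fixpoint alleq (R : rcfType) (N : nat) (G : seq (seq mono * seq mono)) : Prop :=
  match G with
  | [::] => True
  | g :: G' => sumc R N g.1 = sumc R N g.2 /\ alleq R N G'
  end.

Lemma grouping (R : rcfType) (N : nat) (e : nat -> 'I_N) L K :
  uniq K -> {subset [seq meqs m | m <- L] <= K} ->
  lint R N e L = \sum_(k <- K) sumc R N (coefs L k) * pint R N e k.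
Proof.
move=> HK Hsub.
have E1 : lint R N e L = \sum_(k <- K) \sum_(m <- L) (if meqs m == k then mint R N e m else 0).
  rewrite exchange_big /lint /=; elim: L Hsub => [|m L IH] Hs; first by rewrite !big_nil.
  rewrite !big_cons IH; last by move=> k Hk; apply: Hs; rewrite /= in_cons Hk orbT.
  congr (_ + _).
  rewrite -big_mkcond -big_filter (eq_filter (fun k => eq_sym _ _)).
  by rewrite filter_pred1_uniq ?big_seq1 //; apply: Hs; rewrite /= mem_head.
rewrite E1; apply: eq_bigr => k _.
rewrite /sumc /coefs big_filter mulr_suml [RHS]big_mkcond; apply: eq_bigr => m _; case: (meqs m =P k) => [<-|_] //; by rewrite mul0r.
Qed.

Lemma alleq_mem (R : rcfType) (N : nat) (f : seq (nat * nat) -> seq mono * seq mono) K k :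
  alleq R N (map f K) -> k \in K -> sumc R N (f k).1 = sumc R N (f k).2.
Proof.
elim: K => [|k' K IH] //= [H1 H2]; rewrite in_cons => /orP [/eqP -> //|]; exact: IH.
Qed.

Lemma decide (R : rcfType) (N : nat) (e : nat -> 'I_N) L1 L2 :
  alleq R N (groups (lcanon L1) (lcanon L2)) -> lint R N e L1 = lint R N e L2.
Proof.
move=> H; rewrite -(lcanon_ok R N e L1) -(lcanon_ok R N e L2).
move: H; rewrite /groups; set C1 := lcanon L1; set C2 := lcanon L2 => H.
have HK : uniq (keys C1 C2) by exact: undup_uniq.
have S1 : {subset [seq meqs m | m <- C1] <= keys C1 C2}.
  by move=> k Hk; rewrite /keys mem_undup map_cat mem_cat Hk.
have S2 : {subset [seq meqs m | m <- C2] <= keys C1 C2}.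
  by move=> k Hk; rewrite /keys mem_undup map_cat mem_cat Hk orbT.
rewrite (grouping R N e C1 _ HK S1) (grouping R N e C2 _ HK S2).
apply: eq_big_seq => k Hk; congr (_ * _).
by have := @alleq_mem R N _ _ _ H Hk; rewrite /= !sumc_cnorm.
Qed.

Definition M3 z a b i j (s : seq (nat * nat)) := Mono z a b i j s.
Definition pk (v1 v2 v3 w1 w2 w3 : nat) : seq mono :=
  [:: Mono 1 0 1 0 0 [:: (v1,w1); (v2,w2); (v3,w3)];
      Mono (-1) 0 1 0 0 [:: (v1,w3); (v2,w2); (v3,w1)];
      Mono 1 1 1 0 0 [:: (v1,w2); (v2,w1); (v3,w3)];
      Mono 1 1 1 0 0 [:: (v1,w1); (v2,w3); (v3,w2)];
      Mono (-1) 1 1 0 0 [:: (v1,w2); (v2,w3); (v3,w1)];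
      Mono (-1) 1 1 0 0 [:: (v1,w3); (v2,w1); (v3,w2)];
      Mono 1 1 0 0 1 [:: (v1,w3); (v2,v3); (w1,w2)];
      Mono 1 1 0 0 1 [:: (v1,v2); (v3,w1); (w2,w3)];
      Mono (-1) 1 0 0 1 [:: (v1,w1); (v2,v3); (w2,w3)];
      Mono (-1) 1 0 0 1 [:: (v1,v2); (v3,w3); (w1,w2)] ].
Definition vk : seq mono :=
  [:: Mono 1 0 0 0 0 [:: (8,9); (11,12); (14,15); (17,6); (7,13); (10,16)]].
Definition Lpl := lmul (lmul (lmul (pk 0 1 2 6 7 8) (pk 3 4 5 9 10 11)) (pk 12 13 14 15 16 17)) vk.
Definition Lnp := lmul (lmul (lmul (pk 0 1 2 6 7 8) (pk 3 4 5 12 13 14)) (pk 9 10 11 15 16 17)) vk.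
Definition kpl : seq mono := [:: Mono 4 2 1 2 1 [::]; Mono (-9) 2 1 1 1 [::]; Mono 2 2 1 0 1 [::]].
Definition knp : seq mono := [:: Mono 1 0 1 2 1 [::]; Mono (-4) 0 1 0 1 [::]].
Definition vs : seq nat := [:: 6; 7; 8; 9; 10; 11; 12; 13; 14; 15; 16; 17]%N.

Lemma pl_core (R : rcfType) (N : nat) (hN : (3 <= N)%N) (e : nat -> 'I_N) :
  lint R N e (lsumvars vs Lpl) = lint R N e (lmul kpl (pk 0 1 2 3 4 5)).
Proof.
apply: decide.
match goal with |- alleq _ _ ?X =>
  let v := eval vm_compute in X in
  have E : X = v by vm_compute; reflexivity
end.
rewrite E {E} /= /sumc /cval /=.
have hN1 : (N%:R - 1 : R) != 0.
  by rewrite subr_eq0 pnatr_eq1; apply: contraTneq hN => ->.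
rewrite !big_cons !big_nil /=.
repeat split; try field; exact: hN1.
Qed.

Lemma np_core (R : rcfType) (N : nat) (hN : (3 <= N)%N) (e : nat -> 'I_N) :
  lint R N e (lsumvars vs Lnp) = lint R N e (lmul knp (pk 0 1 2 3 4 5)).
Proof.
apply: decide.
match goal with |- alleq _ _ ?X =>
  let v := eval vm_compute in X in
  have E : X = v by vm_compute; reflexivity
end.
rewrite E {E} /= /sumc /cval /=.
have hN1 : (N%:R - 1 : R) != 0.
  by rewrite subr_eq0 pnatr_eq1; apply: contraTneq hN => ->.
rewrite !big_cons !big_nil /=.
repeat split; try field; exact: hN1.
Qed.

Lemma pk_ok (R : rcfType) (N : nat) (e : nat -> 'I_N) v1 v2 v3 w1 w2 w3 (x a : idx N) :
  e v1 = i1 x -> e v2 = i2 x -> e v3 = i3 x ->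
  e w1 = i1 a -> e w2 = i2 a -> e w3 = i3 a ->
  Pker R N x a = lint R N e (pk v1 v2 v3 w1 w2 w3).
Proof.
move=> H1 H2 H3 H4 H5 H6.
rewrite /lint /pk !big_cons big_nil /mint /cval /pint /= !big_cons !big_nil /dl /=.
rewrite H1 H2 H3 H4 H5 H6 /Pker.
have h6 : (6 : R)^-1 = 2^-1 * 3^-1 by rewrite -invfM -natrM.
rewrite h6 invfM; ring.
Qed.

Lemma vk_ok (R : rcfType) (N : nat) (e : nat -> 'I_N) (a b c d : idx N) :
  e 6 = i1 a -> e 7 = i2 a -> e 8 = i3 a ->
  e 9 = i1 b -> e 10 = i2 b -> e 11 = i3 b ->
  e 12 = i1 c -> e 13 = i2 c -> e 14 = i3 c ->
  e 15 = i1 d -> e 16 = i2 d -> e 17 = i3 d ->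
  Vker R N a b c d = lint R N e vk.
Proof.
move=> H1 H2 H3 H4 H5 H6 H7 H8 H9 H10 H11 H12.
rewrite /lint /vk !big_cons big_nil /mint /cval /pint /= !big_cons !big_nil /dl /=.
rewrite H1 H2 H3 H4 H5 H6 H7 H8 H9 H10 H11 H12 /Vker; ring.
Qed.

Lemma sum_idx (R : rcfType) (N : nat) (G : idx N -> R) :
  \sum_(a : idx N) G a = \sum_(i < N) \sum_(j < N) \sum_(k < N) G ((i, j), k).
Proof.
rewrite pair_bigA (pair_bigA _ (fun p k => G ((p.1, p.2), k))) /=.
by apply: eq_bigr => [[[i j] k]] _.
Qed.

Definition upd3 {N : nat} (e : nat -> 'I_N) (v1 v2 v3 : nat) (a : idx N) :=
  upd (upd (upd e v1 (i1 a)) v2 (i2 a)) v3 (i3 a).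

Lemma isum3 (R : rcfType) (N : nat) v1 v2 v3 vs' (e : nat -> 'I_N) F :
  isum R N [:: v1, v2, v3 & vs'] e F = \sum_(a : idx N) isum R N vs' (upd3 e v1 v2 v3 a) F.
Proof. by rewrite sum_idx. Qed.

Definition E0 {N : nat} (x y : idx N) : nat -> 'I_N :=
  upd3 (upd3 (fun _ => i1 x) 0 1 2 x) 3 4 5 y.

Lemma Apl_sum (R : rcfType) (N : nat) (x y : idx N) :
  \sum_(a : idx N) \sum_(b : idx N) \sum_(c : idx N) \sum_(d : idx N)
    Pker R N x a * Pker R N y b * Pker R N c d * Vker R N a b c d
  = lint R N (E0 x y) (lsumvars vs Lpl).
Proof.
rewrite -isum_ok /vs isum3; apply: eq_bigr => a _; rewrite isum3; apply: eq_bigr => b _.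
rewrite isum3; apply: eq_bigr => c _; rewrite isum3; apply: eq_bigr => d _ /=.
rewrite /Lpl !lint_mul.
rewrite -(@pk_ok R N _ 0 1 2 6 7 8 x a) // -(@pk_ok R N _ 3 4 5 9 10 11 y b) //.
rewrite -(@pk_ok R N _ 12 13 14 15 16 17 c d) // -(@vk_ok R N _ a b c d) //.
Qed.

Lemma Anp_sum (R : rcfType) (N : nat) (x y : idx N) :
  \sum_(a : idx N) \sum_(b : idx N) \sum_(c : idx N) \sum_(d : idx N)
    Pker R N x a * Pker R N y c * Pker R N b d * Vker R N a b c d
  = lint R N (E0 x y) (lsumvars vs Lnp).
Proof.
rewrite -isum_ok /vs isum3; apply: eq_bigr => a _; rewrite isum3; apply: eq_bigr => b _.
rewrite isum3; apply: eq_bigr => c _; rewrite isum3; apply: eq_bigr => d _ /=.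
rewrite /Lnp !lint_mul.
rewrite -(@pk_ok R N _ 0 1 2 6 7 8 x a) // -(@pk_ok R N _ 3 4 5 12 13 14 y c) //.
rewrite -(@pk_ok R N _ 9 10 11 15 16 17 b d) // -(@vk_ok R N _ a b c d) //.
Qed.

Lemma N32_neq0 (R : rcfType) (N : nat) : (0 < N)%N -> N32 R N != 0.
Proof.
move=> hN; rewrite /N32 mulf_neq0 //; first by rewrite pnatr_eq0 -lt0n.
by rewrite gt_eqF // sqrtr_gt0 ltr0n.
Qed.

Theorem mainTheorem4 (R : rcfType) (N : nat) (hN : (3 <= N)%N) (lam : R) :
  (forall x y : idx N,
     Apl R N lam x y
     = lam * ((N%:R - 2) * (4 * N%:R - 1) / (12 * N32 R N * (N%:R - 1))) * Pker R N x y)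
  /\ (forall x y : idx N,
     Anp R N lam x y
     = lam * ((N%:R ^+ 2 - 4) / (3 * N32 R N * (N%:R - 1))) * Pker R N x y)
  /\ (forall x y : idx N,
     2 * Apl R N lam x y + Anp R N lam x y = lam * fT R N * Pker R N x y)
  /\ (exists C : R, forall M : nat, (3 <= M)%N ->
        `|fT R M| <= C / Num.sqrt (M%:R)).
Proof.
have hN1 : (N%:R - 1 : R) != 0.
  by rewrite subr_eq0 pnatr_eq1; apply: contraTneq hN => ->.
have h32 : N32 R N != 0 by apply: N32_neq0; apply: leq_trans hN.
have HA : forall x y : idx N, Apl R N lam x y
     = lam * ((N%:R - 2) * (4 * N%:R - 1) / (12 * N32 R N * (N%:R - 1))) * Pker R N x y.
  move=> x y; rewrite /Apl Apl_sum pl_core // lint_mul.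
  rewrite -(@pk_ok R N _ 0 1 2 3 4 5 x y) //.
  rewrite /lint /kpl !big_cons big_nil /mint /cval /pint /= !big_nil.
  field; rewrite hN1 h32 //.
have HB : forall x y : idx N, Anp R N lam x y
     = lam * ((N%:R ^+ 2 - 4) / (3 * N32 R N * (N%:R - 1))) * Pker R N x y.
  move=> x y; rewrite /Anp Anp_sum np_core // lint_mul.
  rewrite -(@pk_ok R N _ 0 1 2 3 4 5 x y) //.
  rewrite /lint /knp !big_cons big_nil /mint /cval /pint /= !big_nil.
  field; rewrite hN1 h32 //.
split; first exact: HA.
split; first exact: HB.
split.
  move=> x y; rewrite HA HB /fT; field; rewrite hN1 h32 //.
exists 1 => M hM.
have hM0 : (0 < M)%N by apply: leq_trans hM.
have hs : 0 < Num.sqrt (M%:R : R) by rewrite sqrtr_gt0 ltr0n.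
have hm : (3 : R) <= M%:R by rewrite ler_nat.
have hden : 0 < 2 * N32 R M * (M%:R - 1).
  rewrite /N32 !mulr_gt0 // ?ltr0n //; lra.
have hf0 : 0 <= fT R M.
  rewrite /fT divr_ge0 ?ltW //; apply: mulr_gt0; lra.
rewrite ger0_norm // -subr_ge0.
have -> : 1 / Num.sqrt (M%:R : R) - fT R M
        = (M%:R + 2) / (2 * N32 R M * (M%:R - 1)).
  rewrite /fT /N32; field.
  rewrite (gt_eqF hs) pnatr_eq0 -lt0n hM0 andbT gt_eqF //; lra.
rewrite divr_ge0 ?ltW //; lra.
Qed.
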